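(* Let $\lambda=\sigma\Lambda+r\gamma\in W\Lambda$ ($\sigma\in S_n$, $\gamma\in Q$) and let $\alpha$ be a positive root. Then $(\lambda,\lambda^\alpha)$ is admissible if and only if one of the following holds: (i) $(\sigma\Lambda,\alpha)>0$, and for every decomposition $\alpha=\beta+\gamma'$ with $\beta,\gamma'$ positive roots, $(\sigma\Lambda,\beta)<0$ or $(\sigma\Lambda,\gamma')<0$; (ii) $(\sigma\Lambda,\alpha)<0$, and for every decomposition $\alpha=\beta+\gamma'$ with $\beta,\gamma'$ positive roots, $(\sigma\Lambda,\beta)<0$ and $(\sigma\Lambda,\gamma')<0$.
   Context: Fix integers $n\ge2$, $r\ge n+2$. $\varepsilon_1,\dots,\varepsilon_n$ orthonormal basis of $\mathbb R^n$ with inner product $(\cdot,\cdot)$; $\bar\varepsilon_i=\varepsilon_i-\frac1n\sum_j\varepsilon_j$, $P=\sum_i\mathbb Z\bar\varepsilon_i$, $\alpha_i=\varepsilon_i-\varepsilon_{i+1}$, $Q=\sum_i\mathbb Z\alpha_i$, $\theta=\alpha_1+\dots+\alpha_{n-1}$; positive roots $\varepsilon_i-\varepsilon_j$ ($i<j$). Fix $\Lambda\in P$ with $(\Lambda,\alpha_i)>0$ for all $i$ and $(\Lambda,\theta)<r$. $S_n$ permutes the $\varepsilon_i$; $\ell(\sigma)$ is the length. Every element of $W\Lambda=\{\sigma\Lambda+r\gamma:\sigma\in S_n,\gamma\in Q\}$ has a unique such expression, and $\deg(\sigma\Lambda+r\gamma)=\ell(\sigma)-2|\gamma|$ with $|\sum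 c_i\alpha_i|=\sum c_i$. For a positive root $\alpha$, $m_\alpha(\lambda)$ is the integer with $0<m_\alpha(\lambda)<r$, $m_\alpha(\lambda)\equiv(\lambda,\alpha)\bmod r$; $\lambda^\alpha=\lambda-m_\alpha(\lambda)\alpha$. The pair $(\lambda,\lambda^\alpha)$ is admissible if $\deg\lambda^\alpha=\deg\lambda+1$. *)

(* Defs.v *)
(* Weights are row vectors in Q^n (the ambient R^n restricted
   to the rational points, which contain P). *)
From HB Require Import structures.
From mathcomp Require Import all_boot all_order all_algebra all_fingroup.
Set Implicit Arguments. Unset Strict Implicit. Unset Printing Implicit Defensive.
Import Order.TTheory GRing.Theory Num.Theory.
Local Open Scope ring_scope.

Section Defs.
Variable n : nat.

(* epsilon_k, for k a natural number index (0-based); zero if k >= n *)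
Definition epsn (k : nat) : 'rV[rat]_n := \row_(j < n) ((nat_of_ord j == k)%:R).
Definition eps (i : 'I_n) : 'rV[rat]_n := epsn i.

Definition ip (u v : 'rV[rat]_n) : rat := \sum_(j < n) u 0 j * v 0 j.

Definition epsbar (i : 'I_n) : 'rV[rat]_n :=
  eps i - (n%:R)^-1 *: \sum_(j < n) eps j.
Definition inP (v : 'rV[rat]_n) : Prop :=
  exists c : 'I_n -> int, v = \sum_(i < n) (c i)%:~R *: epsbar i.

(* simple roots alpha_{k+1} = eps_{k+1} - eps_{k+2}, k < n-1 (0-based) *)
Definition alpha (k : 'I_n.-1) : 'rV[rat]_n := epsn k - epsn k.+1.
Definition theta : 'rV[rat]_n := \sum_(k < n.-1) alpha k.

(* an element gamma = sum c_k alpha_k of Q, given by its coefficients, and |gamma| *)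
Definition gam (c : 'I_n.-1 -> int) : 'rV[rat]_n := \sum_(k < n.-1) (c k)%:~R *: alpha k.
Definition absQ (c : 'I_n.-1 -> int) : int := \sum_(k < n.-1) c k.

(* positive root eps_i - eps_j (intended with i < j) *)
Definition proot (i j : 'I_n) : 'rV[rat]_n := eps i - eps j.

(* S_n permutes the eps_i : sigma eps_i = eps_(sigma i) *)
Definition sact (s : 'S_n) (v : 'rV[rat]_n) : 'rV[rat]_n := \row_(j < n) v 0 ((s^-1)%g j).

(* Coxeter length of a permutation = number of inversions *)
Definition plength (s : 'S_n) : nat :=
  #|[set p : 'I_n * 'I_n | (p.1 < p.2)%N && (s p.2 < s p.1)%N]|.

Variable r : nat.
Variable Lam : 'rV[rat]_n.

(* deg lam = d, where lam = sigma Lam + r gamma (expression unique by the paper) *)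
Definition is_deg (lam : 'rV[rat]_n) (d : int) : Prop :=
  exists (s : 'S_n) (c : 'I_n.-1 -> int),
    lam = sact s Lam + r%:R *: gam c /\ d = (plength s)%:Z - 2 * absQ c.

Definition admissible (lam mu : 'rV[rat]_n) : Prop :=
  exists d : int, is_deg lam d /\ is_deg mu (d + 1).

Definition malpha (lam a : 'rV[rat]_n) : rat :=
  ip lam a - r%:R * (Num.floor (ip lam a / r%:R))%:~R.

Definition refl (lam a : 'rV[rat]_n) : 'rV[rat]_n := lam - malpha lam a *: a.

End Defs.

(* Main.v *)
Require Import Defs.
From HB Require Import structures.
From mathcomp Require Import all_boot all_order all_algebra all_fingroup.
From mathcomp Require Import zify ring lra.
Import Order.TTheory GRing.Theory Num.Theory.
Local Open Scope ring_scope.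
Set Implicit Arguments. Unset Strict Implicit. Unset Printing Implicit Defensive.

Lemma ipC n (u v : 'rV[rat]_n) : ip u v = ip v u.
Proof. by apply: eq_bigr => k _; rewrite mulrC. Qed.

Lemma ipDl n (u v w : 'rV[rat]_n) : ip (u + v) w = ip u w + ip v w.
Proof. by rewrite /ip -big_split; apply: eq_bigr => k _; rewrite mxE mulrDl. Qed.

Lemma ipNl n (u w : 'rV[rat]_n) : ip (- u) w = - ip u w.
Proof. by rewrite /ip -sumrN; apply: eq_bigr => k _; rewrite mxE mulNr. Qed.

Lemma ipBl n (u v w : 'rV[rat]_n) : ip (u - v) w = ip u w - ip v w.
Proof. by rewrite ipDl ipNl. Qed.

Lemma ipZl n a (u w : 'rV[rat]_n) : ip (a *: u) w = a * ip u w.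
Proof. by rewrite /ip mulr_sumr; apply: eq_bigr => k _; rewrite mxE mulrA. Qed.

Lemma ip_suml n (I : finType) (F : I -> 'rV[rat]_n) w :
  ip (\sum_(x : I) F x) w = \sum_(x : I) ip (F x) w.
Proof.
rewrite /ip exchange_big /=; apply: eq_bigr => k _.
by rewrite summxE mulr_suml.
Qed.

Lemma ipDr n (u v w : 'rV[rat]_n) : ip w (u + v) = ip w u + ip w v.
Proof. by rewrite !(ipC w) ipDl. Qed.
Lemma ipBr n (u v w : 'rV[rat]_n) : ip w (u - v) = ip w u - ip w v.
Proof. by rewrite !(ipC w) ipBl. Qed.
Lemma ipZr n a (u w : 'rV[rat]_n) : ip w (a *: u) = a * ip w u.
Proof. by rewrite !(ipC w) ipZl. Qed.

Lemma ip_eps n (v : 'rV[rat]_n) (k : 'I_n) : ip v (eps k) = v 0 k.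
Proof.
rewrite /ip (bigD1 k) //= big1 ?addr0.
  by rewrite /eps /epsn mxE eqxx mulr1.
by move=> l hl; rewrite /eps /epsn mxE; rewrite (_ : (nat_of_ord l == nat_of_ord k) = false) ?mulr0 //; exact: negbTE.
Qed.

Lemma ip_epsn n (v : 'rV[rat]_n) m (h : (m < n)%N) : ip v (epsn n m) = v 0 (Ordinal h).
Proof. by rewrite -(ip_eps v (Ordinal h)). Qed.

Lemma ip_proot n (v : 'rV[rat]_n) (a b : 'I_n) : ip v (proot a b) = v 0 a - v 0 b.
Proof. by rewrite /proot ipBr !ip_eps. Qed.

Lemma sactE n (s : 'S_n) (v : 'rV[rat]_n) k : sact s v 0 k = v 0 (s^-1 k)%g.
Proof. by rewrite mxE. Qed.


Definition Ln n (Lam : 'rV[rat]_n) m := ip Lam (epsn n m).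

Lemma LnE n (Lam : 'rV[rat]_n) (p : 'I_n) : Ln Lam p = Lam 0 p.
Proof. exact: ip_eps. Qed.

Lemma Ldec_step n (Lam : 'rV[rat]_n)
  (Hdom : forall k : 'I_n.-1, 0 < ip Lam (alpha k)) k :
  (k.+1 < n)%N -> Ln Lam k.+1 < Ln Lam k.
Proof.
move=> hk; have hk' : (k < n.-1)%N by lia.
by have := Hdom (Ordinal hk'); rewrite /alpha ipBr subr_gt0.
Qed.

Lemma Ldec n (Lam : 'rV[rat]_n)
  (Hdom : forall k : 'I_n.-1, 0 < ip Lam (alpha k)) p q :
  (p < q)%N -> (q < n)%N -> Ln Lam q < Ln Lam p.
Proof.
elim: q => // q IH hpq hq.
have h1 := Ldec_step Hdom hq.
case: (ltngtP p q) => [hlt||heq]; [| lia | by rewrite heq].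
exact: lt_trans h1 (IH hlt (ltnW hq)).
Qed.

Lemma Ldec_le n (Lam : 'rV[rat]_n)
  (Hdom : forall k : 'I_n.-1, 0 < ip Lam (alpha k)) p q :
  (p <= q)%N -> (q < n)%N -> Ln Lam q <= Ln Lam p.
Proof.
rewrite leq_eqVlt => /orP [/eqP ->|h] hq //.
exact: ltW (Ldec Hdom h hq).
Qed.

Lemma Llt n (Lam : 'rV[rat]_n)
  (Hdom : forall k : 'I_n.-1, 0 < ip Lam (alpha k)) (p q : 'I_n) :
  (Lam 0 p < Lam 0 q) = (q < p)%N.
Proof.
rewrite -!LnE; case: (ltngtP q p) => h.
- have := Ldec Hdom h (ltn_ord p). by [].
- by apply/negbTE; rewrite -leNgt; exact: ltW (Ldec Hdom h (ltn_ord q)).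
- by rewrite (val_inj h) ltxx.
Qed.

Lemma Ltheta n (Lam : 'rV[rat]_n) : ip Lam (theta n) = Ln Lam 0 - Ln Lam n.-1.
Proof.
rewrite ipC /theta ip_suml.
rewrite (eq_bigr (fun k : 'I_n.-1 => (fun m => - Ln Lam m) (k.+1) - (fun m => - Ln Lam m) k)).
  by rewrite -(big_mkord xpredT (fun k => - Ln Lam k.+1 - - Ln Lam k)) telescope_sumr // opprK addrC.
move=> k _; rewrite /alpha ipBl !(ipC _ Lam) /Ln; lra.
Qed.

Lemma Lbound n r (Lam : 'rV[rat]_n)
  (Hdom : forall k : 'I_n.-1, 0 < ip Lam (alpha k))
  (Htheta : ip Lam (theta n) < r%:R) (p q : 'I_n) : Lam 0 p - Lam 0 q < r%:R.
Proof.
apply: le_lt_trans Htheta; rewrite Ltheta -!LnE.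
have hn : (n.-1 < n)%N by have := ltn_ord p; lia.
have hq : (q <= n.-1)%N by have := ltn_ord q; lia.
exact: (lerB (Ldec_le Hdom (leq0n p) (ltn_ord p)) (Ldec_le Hdom hq hn)).
Qed.

Lemma Lcoord n (Lam : 'rV[rat]_n) (c : 'I_n -> int)
  (E : Lam = \sum_(i < n) (c i)%:~R *: epsbar i) (p : 'I_n) :
  Lam 0 p = (c p)%:~R - (n%:R)^-1 * \sum_(i < n) (c i)%:~R.
Proof.
rewrite E summxE.
rewrite (eq_bigr (fun i => (c i)%:~R * ((i == p)%:R - (n%:R)^-1))); last first.
  move=> i _; rewrite /epsbar !mxE summxE.
  have e1 : forall k : 'I_n, (eps k) 0 p = ((k == p) : nat)%:R.
    by move=> k; rewrite /eps /epsn mxE eq_sym.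
  rewrite (eq_bigr (fun k : 'I_n => ((k == p) : nat)%:R)); last by move=> k _; rewrite e1.
  have -> : \sum_(k < n) ((k == p) : nat)%:R = 1 :> rat.
    rewrite (bigD1 p) //= eqxx big1 ?addr0 // => k /negbTE ->; by [].
  by rewrite mulr1 eq_sym.
rewrite (eq_bigr (fun i => (c i)%:~R * (i == p)%:R - (n%:R)^-1 * (c i)%:~R)); last first.
  by move=> i _; ring.
rewrite sumrB -mulr_sumr; congr (_ - _).
rewrite (bigD1 p) //= eqxx mulr1 big1 ?addr0 // => i /negbTE ->; by rewrite mulr0.
Qed.

Lemma Lint n (Lam : 'rV[rat]_n) (HP : inP Lam) (p q : 'I_n) :
  exists z : int, Lam 0 p - Lam 0 q = z%:~R.
Proof. case: HP => c E; exists (c p - c q); rewrite !(Lcoord E) intrB; ring. Qed.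

Lemma gam_int n (c : 'I_n.-1 -> int) (p : 'I_n) : gam c 0 p \is a Num.int.
Proof.
rewrite /gam summxE rpred_sum // => k _.
rewrite !mxE rpredM ?intr_int // rpredB // ?natr_int //.
Qed.

Lemma int_ex (x : rat) : x \is a Num.int -> exists z : int, x = z%:~R.
Proof. by move/intrP. Qed.

Lemma malpha_eq n (r : nat) (lam a : 'rV[rat]_n) (t : rat) (w : int) :
  (0 < r)%N -> 0 <= t < r%:R -> ip lam a = t + r%:R * w%:~R -> malpha r lam a = t.
Proof.
move=> r0 /andP [t0 tr] E.
have rp : 0 < (r%:R : rat) by rewrite ltr0n.
rewrite /malpha.
have -> : Num.floor (ip lam a / r%:R) = w.
  apply: floor_def; rewrite E mulrDl mulrAC mulrV ?mul1r; last by rewrite unitfE gt_eqF.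
  rewrite intrD lerDr divr_ge0 //= ?ltW //.
  by rewrite addrC ltrD2l ltr_pdivrMr // mul1r.
rewrite E; ring.
Qed.

Lemma sact_swap n (s : 'S_n) (Lam : 'rV[rat]_n) (i j : 'I_n) : i != j ->
  sact (s * tperm i j)%g Lam = sact s Lam - (sact s Lam 0 i - sact s Lam 0 j) *: proot i j.
Proof.
move=> nij; apply/rowP => k; rewrite !mxE invMg tpermV permM.
case: tpermP => [->|->|/eqP ki /eqP kj].
-   rewrite eqxx (_ : (nat_of_ord i == nat_of_ord j) = false); last exact: negbTE.
  rewrite /=; ring.
- rewrite eqxx (_ : (nat_of_ord j == nat_of_ord i) = false); last by rewrite eq_sym; exact: negbTE.
  rewrite /=; ring.
- rewrite (_ : (nat_of_ord k == nat_of_ord i) = false); last exact: negbTE.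
  rewrite (_ : (nat_of_ord k == nat_of_ord j) = false); last exact: negbTE.
  rewrite /=; ring.
Qed.

Definition wv n : 'rV[rat]_n := \row_(p < n) (p : nat)%:R.

Lemma absQE n (c : 'I_n.-1 -> int) : (absQ c)%:~R = - ip (gam c) (wv n).
Proof.
rewrite /absQ /gam ip_suml rmorph_sum -sumrN; apply: eq_bigr => k _.
rewrite ipZl /alpha ipBl !(ipC _ (wv n)).
have h1 : (k < n)%N by have := ltn_ord k; lia.
have h2 : (k.+1 < n)%N by have := ltn_ord k; lia.
rewrite (ip_epsn _ h1) (ip_epsn _ h2) !mxE /= -addn1 natrD; ring.
Qed.

Lemma absQ_proot n (i j : 'I_n) : ip (proot i j) (wv n) = (i : nat)%:R - (j : nat)%:R.
Proof. by rewrite ipC ip_proot !mxE. Qed.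

Definition alphan n m : 'rV[rat]_n := epsn n m - epsn n m.+1.

Lemma sum_alpha_range n (i j : 'I_n) : (i < j)%N ->
  \sum_(k < n.-1) (((i <= k)%N && (k < j)%N) : nat)%:R *: alpha k = proot i j.
Proof.
move=> hij.
rewrite (eq_bigr (fun k : 'I_n.-1 => (fun m => if (i <= m < j)%N then alphan n m else 0) (nat_of_ord k))); last first.
  by move=> k _; case: ifP => _; rewrite ?scale1r ?scale0r.
set F := fun m => if (i <= m < j)%N then alphan n m else 0.
rewrite -(big_mkord xpredT F).
have hj : (j <= n.-1)%N by have := ltn_ord j; lia.
rewrite (big_cat_nat _ (n := i)) //=; last by lia.
rewrite (big_cat_nat _ (m := i) (n := j)) //=; last by lia.
have -> : \sum_(0 <= k < i) F k = 0.
  by rewrite big_nat_cond big1 // => k /andP [/andP [h1 h2] _]; rewrite /F ifF //; apply/negbTE; lia.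
have -> : \sum_(j <= k < n.-1) F k = 0.
  by rewrite big_nat_cond big1 // => k /andP [/andP [h1 h2] _]; rewrite /F ifF //; apply/negbTE; lia.
rewrite add0r addr0.
rewrite (eq_big_nat _ _ (F2 := fun k => (fun m => - epsn n m) k.+1 - (fun m => - epsn n m) k)); last first.
  by move=> k /andP [h1 h2]; rewrite /F ifT ?h1 ?h2 // /alphan opprK addrC.
by rewrite telescope_sumr ?(ltnW hij) // opprK addrC.
Qed.

Lemma gam_shift n (c : 'I_n.-1 -> int) (i j : 'I_n) : (i < j)%N ->
  gam (fun k : 'I_n.-1 => c k - (((i <= k)%N && (k < j)%N) : nat)%:Z) = gam c - proot i j.
Proof.
move=> hij; rewrite -(sum_alpha_range hij) /gam -sumrB; apply: eq_bigr => k _.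
by rewrite intrB scalerBl.
Qed.

Lemma rep_unique n (r : nat) (Lam : 'rV[rat]_n) (HP : inP Lam)
  (Hdom : forall k : 'I_n.-1, 0 < ip Lam (alpha k))
  (Htheta : ip Lam (theta n) < r%:R) (r0 : (0 < r)%N)
  (s s' : 'S_n) (c c' : 'I_n.-1 -> int) :
  sact s Lam + r%:R *: gam c = sact s' Lam + r%:R *: gam c' -> s = s' /\ absQ c = absQ c'.
Proof.
move=> E.
have rp : 0 < (r%:R : rat) by rewrite ltr0n.
have co : forall k, (s^-1 k = s'^-1 k)%g.
  move=> k; have := congr1 (fun v : 'rV[rat]_n => v 0 k) E; rewrite /= !mxE => Ek.
  have [z Hz] := Lint HP (s^-1 k)%g (s'^-1 k)%g.
  have [g Hg] := int_ex (gam_int c k).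
  have [g' Hg'] := int_ex (gam_int c' k).
  have Hd : z%:~R = r%:R * (g' - g)%:~R :> rat.
    by rewrite -Hz intrB -Hg -Hg'; lra.
  have b1 := Lbound Hdom Htheta (s^-1 k)%g (s'^-1 k)%g.
  have b2 := Lbound Hdom Htheta (s'^-1 k)%g (s^-1 k)%g.
  rewrite Hz Hd -{2}(mulr1 r%:R) ltr_pM2l // -[1]/(1%:~R) ltr_int in b1.
  have b2' : r%:R * (g - g')%:~R < r%:R * 1 :> rat.
    by rewrite (_ : g - g' = - (g' - g)); [rewrite intrN mulrN -Hd -Hz opprB mulr1 | ring].
  rewrite ltr_pM2l // -[1]/(1%:~R) ltr_int in b2'.
  have e0 : g' - g = 0 by lia.
  rewrite e0 mulr0 in Hd.
  have Heq : Lam 0 (s^-1 k)%g = Lam 0 (s'^-1 k)%g by apply/eqP; rewrite -subr_eq0 Hz Hd.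
  apply: val_inj => /=.
  case: (ltngtP (s^-1 k)%g (s'^-1 k)%g) => // h.
  - by have := Llt Hdom (s'^-1 k)%g (s^-1 k)%g; rewrite h Heq ltxx.
  - by have := Llt Hdom (s^-1 k)%g (s'^-1 k)%g; rewrite h Heq ltxx.
have ess : s = s'.
  have : (s^-1 = s'^-1)%g by apply/permP => k; exact: co.
  by move=> h; rewrite -[s]invgK -[s']invgK h.
split=> //.
rewrite ess in E; move/addrI: E => /scalerI E.
have {}E : gam c = gam c' by apply: E; rewrite pnatr_eq0 -lt0n.
by apply/eqP; rewrite -(eqr_int rat) !absQE E.
Qed.

Lemma adm_iff n (r : nat) (Lam : 'rV[rat]_n) (HP : inP Lam)
  (Hdom : forall k : 'I_n.-1, 0 < ip Lam (alpha k))
  (Htheta : ip Lam (theta n) < r%:R) (r0 : (0 < r)%N)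
  (s s' : 'S_n) (c c' : 'I_n.-1 -> int) :
  admissible r Lam (sact s Lam + r%:R *: gam c) (sact s' Lam + r%:R *: gam c') <->
  (plength s')%:Z - 2 * absQ c' = (plength s)%:Z - 2 * absQ c + 1.
Proof.
split.
- case=> d [[s1 [c1 [E1 D1]]] [s2 [c2 [E2 D2]]]].
  have [-> e1] := rep_unique HP Hdom Htheta r0 E1.
  have [-> e2] := rep_unique HP Hdom Htheta r0 E2.
  by rewrite e1 e2 -D1 -D2.
- move=> E; exists ((plength s)%:Z - 2 * absQ c); split.
    by exists s, c.
  by exists s', c'; rewrite E.
Qed.

Definition Ninv n (f : 'I_n -> nat) : nat :=
  \sum_(k < n) \sum_(l < n) (((k < l)%N && (f l < f k)%N) : nat).

Notation bz b := (((b : bool) : nat)%:Z).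

Lemma NinvZ n (f : 'I_n -> nat) :
  (Ninv f)%:Z = \sum_(k < n) \sum_(l < n) bz (k < l)%N * bz (f l < f k)%N.
Proof.
rewrite /Ninv (big_morph Posz PoszD (erefl _)); apply: eq_bigr => k _.
rewrite (big_morph Posz PoszD (erefl _)); apply: eq_bigr => l _.
by rewrite -PoszM mulnb.
Qed.

Lemma tpermE_nat n (i j k : 'I_n) :
  (tperm i j k : nat) = if (k : nat) == i then (j : nat) else if (k : nat) == j then (i : nat) else k.
Proof.
case: tpermP => [->|->|ki kj]; rewrite ?eqxx //.
- by case: eqP => // ->.
- have e1 : ((k : nat) == i) = false by apply/eqP => h; apply: ki; exact: val_inj.
  have e2 : ((k : nat) == j) = false by apply/eqP => h; apply: kj; exact: val_inj.
  by rewrite e1 e2.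
Qed.

Lemma delta1 n (a : 'I_n) (F : 'I_n -> int) :
  \sum_(k < n) bz ((k : nat) == a) * F k = F a.
Proof.
rewrite (bigD1 a) //= eqxx mul1r big1 ?addr0 // => k hk.
by rewrite (_ : ((k : nat) == a) = false) ?mul0r //; apply/negbTE.
Qed.

Lemma DL1 n (a : 'I_n) (H : 'I_n -> 'I_n -> int) :
  \sum_(k < n) \sum_(l < n) bz ((k : nat) == a) * H k l = \sum_(l < n) H a l.
Proof.
rewrite -(delta1 a (fun k => \sum_(l < n) H k l)); apply: eq_bigr => k _.
by rewrite mulr_sumr.
Qed.

Lemma DL2 n (a : 'I_n) (H : 'I_n -> 'I_n -> int) :
  \sum_(k < n) \sum_(l < n) bz ((l : nat) == a) * H k l = \sum_(k < n) H k a.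
Proof. by apply: eq_bigr => k _; rewrite delta1. Qed.

Lemma Gpt n (i j k l : 'I_n) : (i < j)%N ->
  bz (tperm i j k < tperm i j l)%N - bz (k < l)%N =
  bz ((k : nat) == j) * bz ((l : nat) == i) - bz ((k : nat) == i) * bz ((l : nat) == j)
  + bz ((k : nat) == j) * bz ((i < l)%N && (l < j)%N)
  + bz ((l : nat) == i) * bz ((i < k)%N && (k < j)%N)
  - bz ((k : nat) == i) * bz ((i < l)%N && (l < j)%N)
  - bz ((l : nat) == j) * bz ((i < k)%N && (k < j)%N).
Proof.
move=> hij; rewrite !tpermE_nat.
case: (eqVneq (k : nat) i) => e1; case: (eqVneq (k : nat) j) => e2;
case: (eqVneq (l : nat) i) => e3; case: (eqVneq (l : nat) j) => e4; lia.
Qed.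

Lemma Ninv_swap n (f : 'I_n -> nat) (i j : 'I_n) : (i < j)%N ->
  (Ninv (fun k => f (tperm i j k)))%:Z - (Ninv f)%:Z =
  bz (f i < f j)%N - bz (f j < f i)%N +
  \sum_(l < n) bz ((i < l)%N && (l < j)%N) *
     (bz (f l < f j)%N + bz (f i < f l)%N - bz (f l < f i)%N - bz (f j < f l)%N).
Proof.
move=> hij; rewrite !NinvZ.
set t := tperm i j.
have tK : forall x, t (t x) = x by move=> x; rewrite tpermK.
have R : \sum_(k < n) \sum_(l < n) bz (k < l)%N * bz (f (t l) < f (t k))%N =
    \sum_(k < n) \sum_(l < n) bz (t k < t l)%N * bz (f l < f k)%N.
  rewrite (reindex_inj (@perm_inj _ t)); apply: eq_bigr => k _.
  rewrite (reindex_inj (@perm_inj _ t)); apply: eq_bigr => l _.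
  by rewrite !tK.
rewrite R -sumrB.
under eq_bigr => k _ do rewrite -sumrB.
under eq_bigr => k _ do under eq_bigr => l _ do rewrite -mulrBl (Gpt k l hij).
set Y := fun k l : 'I_n => bz (f l < f k)%N.
pose ci := fun k : 'I_n => bz ((i < k)%N && (k < j)%N).
have P : forall k l : 'I_n, (bz ((k : nat) == j) * bz ((l : nat) == i) - bz ((k : nat) == i) * bz ((l : nat) == j)
  + bz ((k : nat) == j) * bz ((i < l)%N && (l < j)%N)
  + bz ((l : nat) == i) * bz ((i < k)%N && (k < j)%N)
  - bz ((k : nat) == i) * bz ((i < l)%N && (l < j)%N)
  - bz ((l : nat) == j) * bz ((i < k)%N && (k < j)%N)) * Y k l =
    bz ((k : nat) == j) * (bz ((l : nat) == i) * Y k l)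
  - bz ((k : nat) == i) * (bz ((l : nat) == j) * Y k l)
  + bz ((k : nat) == j) * (ci l * Y k l)
  + bz ((l : nat) == i) * (ci k * Y k l)
  - bz ((k : nat) == i) * (ci l * Y k l)
  - bz ((l : nat) == j) * (ci k * Y k l).
  by move=> k l; rewrite /ci; ring.
under eq_bigr => k _ do under eq_bigr => l _ do rewrite P.
under eq_bigr => k _ do rewrite !big_split /= !sumrN.
rewrite !big_split /= !sumrN.
rewrite !DL1 !DL2 !delta1.
under [X in _ = _ + X]eq_bigr => l _ do rewrite mulrBr mulrBr mulrDr.
rewrite !big_split /= !sumrN.
rewrite /Y /ci; ring.
Qed.

Lemma cnt_range n (i j : 'I_n) : (i < j)%N ->
  \sum_(l < n) bz ((i < l)%N && (l < j)%N) = ((j - i.+1)%N)%:Z.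
Proof.
move=> hij; rewrite -(big_morph Posz PoszD (erefl _)); congr Posz.
rewrite -(big_mkord xpredT (fun l => (((i < l)%N && (l < j)%N) : nat))).
have hj := ltn_ord j.
rewrite (big_cat_nat _ (n := i.+1)) //=.
rewrite (big_cat_nat _ (m := i.+1) (n := j)) //=; last exact: ltnW.
set F := fun l => (((i < l)%N && (l < j)%N) : nat).
have -> : (\sum_(0 <= k < i.+1) F k = 0)%N.
  by rewrite big_nat_cond big1 // => k /andP [/andP [h1 h2] _]; apply/eqP; rewrite eqb0; lia.
have -> : (\sum_(j <= k < n) F k = 0)%N.
  by rewrite big_nat_cond big1 // => k /andP [/andP [h1 h2] _]; apply/eqP; rewrite eqb0; lia.
rewrite (eq_big_nat _ _ (F2 := fun _ => 1%N)); last by move=> k /andP [h1 h2]; rewrite /F h2 h1.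
by rewrite sum_nat_const_nat muln1 add0n addn0.
Qed.

Lemma plengthE n (s : 'S_n) : plength s = Ninv (fun k => ((s^-1)%g k : nat)).
Proof.
rewrite /plength -sum1_card big_mkcond /=.
rewrite (eq_bigr (fun p : 'I_n * 'I_n => (((p.1 < p.2)%N && (s p.2 < s p.1)%N) : nat))); last first.
  by move=> p _; rewrite inE; case: ifP.
rewrite -(pair_bigA _ (fun a b : 'I_n => (((a < b)%N && (s b < s a)%N) : nat))) /=.
rewrite (reindex_inj (@perm_inj _ (s^-1)%g)) /=.
rewrite exchange_big /Ninv /= (reindex_inj (@perm_inj _ (s^-1)%g)) /=.
apply: eq_bigr => k _; apply: eq_bigr => l _.
by rewrite !permKV andbC.
Qed.

Lemma Ninv_ext n (f g : 'I_n -> nat) : f =1 g -> Ninv f = Ninv g.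
Proof. by move=> e; apply: eq_bigr => k _; apply: eq_bigr => l _; rewrite !e. Qed.

Lemma key1 (a b p1 q1 p2 q2 : nat) : (p1 < q1)%N -> (p2 < q2)%N ->
  ((p1 == a) + (p1 == q1) + (p1 == q2) = (p1 == b) + (p1 == p1) + (p1 == p2))%N ->
  ((p2 == a) + (p2 == q1) + (p2 == q2) = (p2 == b) + (p2 == p1) + (p2 == p2))%N ->
  p1 = q2 \/ p2 = q1.
Proof.
move=> h1 h2.
case: (eqVneq p1 q2) => [->|n1]; first by left.
case: (eqVneq p2 q1) => [->|n2]; first by right.
rewrite !eqxx (ltn_eqF h1) (ltn_eqF h2) ?(negbTE n1) ?(negbTE n2) => c1 c2.
exfalso; move: c1 c2.
case: (eqVneq p1 a) => [->|e1]; case: (eqVneq p2 a) => [->|e2] //=; rewrite ?eqxx /=.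
- by rewrite !addn0 !addnS.
- by rewrite !addn0 !addnS.
- by rewrite !addn0 addnS.
- by rewrite !addn0 addnS.
Qed.

Lemma key2 (a b q1 p2 q2 : nat) : (q2 < q1)%N -> (p2 < q2)%N ->
  ((p2 == a) + (p2 == q1) + (p2 == q2) = (p2 == b) + (p2 == q2) + (p2 == p2))%N ->
  ((q1 == a) + (q1 == q1) + (q1 == q2) = (q1 == b) + (q1 == q2) + (q1 == p2))%N ->
  p2 = a /\ q1 = b.
Proof.
move=> h1 h2 c1 c2.
split; apply/eqP; move: c1 c2; case: eqP => //; case: eqP => //; case: eqP => //;
  case: eqP => //; case: eqP => //; lia.
Qed.

Lemma decomp n (i j i1 j1 i2 j2 : 'I_n) : (i < j)%N -> (i1 < j1)%N -> (i2 < j2)%N ->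
  proot i j = proot i1 j1 + proot i2 j2 ->
  exists k : 'I_n, (i < k < j)%N /\
    ((i1 = i /\ j1 = k /\ i2 = k /\ j2 = j) \/ (i1 = k /\ j1 = j /\ i2 = i /\ j2 = k)).
Proof.
move=> hij h1 h2 E.
have C : forall p : 'I_n, ((((p : nat) == i) : nat) + (((p : nat) == j1) : nat) + (((p : nat) == j2) : nat)
   = (((p : nat) == j) : nat) + (((p : nat) == i1) : nat) + (((p : nat) == i2) : nat))%N.
  move=> p; have := congr1 (fun v : 'rV[rat]_n => v 0 p) E; rewrite /proot /eps /epsn !mxE => Ep.
  apply/eqP; rewrite -(eqr_nat rat) !natrD; apply/eqP; lra.
have C' : forall p : 'I_n, ((((p : nat) == i) : nat) + (((p : nat) == j2) : nat) + (((p : nat) == j1) : nat)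
   = (((p : nat) == j) : nat) + (((p : nat) == i2) : nat) + (((p : nat) == i1) : nat))%N.
  by move=> p; move: (C p); rewrite addnAC [in X in _ = X -> _]addnAC.
have [e|e] := key1 h1 h2 (C i1) (C i2).
- have e' : i1 = j2 by apply: val_inj.
  move: (C i2) (C j1); rewrite -!e => c1 c2.
  have h2' : (i2 < i1)%N by rewrite e.
  have [a1 a2] := key2 h1 h2' c1 c2.
  exists i1; split; first by apply/andP; split; [rewrite -a1 | rewrite -a2].
  right; split=> //; split; first by apply: val_inj.
  by split; [apply: val_inj|].
- have e' : i2 = j1 by apply: val_inj.
  move: (C' i1) (C' j2); rewrite -!e => c1 c2.
  have h1' : (i1 < i2)%N by rewrite e.
  have [a1 a2] := key2 h2 h1' c1 c2.
  exists i2; split; first by apply/andP; split; [rewrite -a1 | rewrite -a2].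
  left; split; first by apply: val_inj.
  by split=> //; split=> //; apply: val_inj.
Qed.

Unset Implicit Arguments. Set Strict Implicit.

Lemma zmod_rearr (V : zmodType) (x g u v : V) : x + g - (u + v) = x - u + (g - v).
Proof. by rewrite opprD !addrA (addrAC x g). Qed.

Theorem lemmaA3 (n r : nat) (hn : (2 <= n)%N) (hr : (n + 2 <= r)%N)
  (Lam : 'rV[rat]_n) (HP : inP Lam)
  (Hdom : forall k : 'I_n.-1, 0 < ip Lam (alpha k))
  (Htheta : ip Lam (theta n) < r%:R)
  (s : 'S_n) (c : 'I_n.-1 -> int) (i j : 'I_n) (hij : (i < j)%N) :
  admissible r Lam (sact s Lam + r%:R *: gam c)
    (refl r (sact s Lam + r%:R *: gam c) (proot i j))
  <->
  ((0 < ip (sact s Lam) (proot i j) /\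
     forall i1 j1 i2 j2 : 'I_n, (i1 < j1)%N -> (i2 < j2)%N ->
       proot i j = proot i1 j1 + proot i2 j2 ->
       ip (sact s Lam) (proot i1 j1) < 0 \/ ip (sact s Lam) (proot i2 j2) < 0)
   \/
   (ip (sact s Lam) (proot i j) < 0 /\
     forall i1 j1 i2 j2 : 'I_n, (i1 < j1)%N -> (i2 < j2)%N ->
       proot i j = proot i1 j1 + proot i2 j2 ->
       ip (sact s Lam) (proot i1 j1) < 0 /\ ip (sact s Lam) (proot i2 j2) < 0)).
Proof.
have r0 : (0 < r)%N by lia.
have rp : 0 < (r%:R : rat) by rewrite ltr0n.
set x := sact s Lam.
set f := fun k : 'I_n => ((s^-1)%g k : nat).
have finj : forall a b : 'I_n, (f a == f b) = (a == b).
  by move=> a b; rewrite /f val_eqE (inj_eq (@perm_inj _ _)).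
have fi : forall l : 'I_n, (i < l)%N -> f l != f i.
  by move=> l hl; rewrite finj; apply/eqP => e; rewrite e ltnn in hl.
have fj : forall l : 'I_n, (l < j)%N -> f l != f j.
  by move=> l hl; rewrite finj; apply/eqP => e; rewrite e ltnn in hl.
have ipx : forall a b, ip x (proot a b) = Lam 0 ((s^-1)%g a) - Lam 0 ((s^-1)%g b).
  by move=> a b; rewrite ip_proot !sactE.
have lt0 : forall a b, (ip x (proot a b) < 0) = (f b < f a)%N.
  by move=> a b; rewrite ipx subr_lt0 (Llt Hdom).
have gt0 : forall a b, (0 < ip x (proot a b)) = (f a < f b)%N.
  by move=> a b; rewrite ipx subr_gt0 (Llt Hdom).
have split_ij : forall k : 'I_n, proot i j = proot i k + proot k j.
  by move=> k; rewrite /proot addrA subrK.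
have DecOr : (forall i1 j1 i2 j2 : 'I_n, (i1 < j1)%N -> (i2 < j2)%N ->
       proot i j = proot i1 j1 + proot i2 j2 ->
       ip x (proot i1 j1) < 0 \/ ip x (proot i2 j2) < 0) <->
     (forall k : 'I_n, (i < k < j)%N -> (f k < f i)%N \/ (f j < f k)%N).
  split.
  - move=> H k /andP [h1 h2]; have := H i k k j h1 h2 (split_ij k).
    by rewrite !lt0.
  - move=> H i1 j1 i2 j2 h1 h2 E.
    have [k [hk [[-> [-> [-> ->]]] | [-> [-> [-> ->]]]]]] := decomp hij h1 h2 E;
      rewrite !lt0; case: (H k hk) => ->; auto.
have DecAnd : (forall i1 j1 i2 j2 : 'I_n, (i1 < j1)%N -> (i2 < j2)%N ->
       proot i j = proot i1 j1 + proot i2 j2 ->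
       ip x (proot i1 j1) < 0 /\ ip x (proot i2 j2) < 0) <->
     (forall k : 'I_n, (i < k < j)%N -> (f k < f i)%N /\ (f j < f k)%N).
  split.
  - move=> H k /andP [h1 h2]; have := H i k k j h1 h2 (split_ij k).
    by rewrite !lt0.
  - move=> H i1 j1 i2 j2 h1 h2 E.
    have [k [hk [[-> [-> [-> ->]]] | [-> [-> [-> ->]]]]]] := decomp hij h1 h2 E;
      rewrite !lt0; case: (H k hk) => -> ->; auto.
set t := tperm i j.
have nij : i != j by apply/eqP => e; rewrite e ltnn in hij.
have P0 : plength s = Ninv f := plengthE s.
have P1 : plength (s * t)%g = Ninv (fun k => f (t k)).
  rewrite plengthE; apply: Ninv_ext => k.
  by rewrite /f invMg tpermV permM.
have SW := Ninv_swap f hij.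
have CNT := cnt_range hij.
have [w Hw] : exists w : int, ip (gam c) (proot i j) = w%:~R.
  by apply: int_ex; rewrite ip_proot rpredB ?gam_int.
have Hip : ip (x + r%:R *: gam c) (proot i j) = ip x (proot i j) + r%:R * w%:~R.
  by rewrite ipDl ipZl Hw.
have bnd1 := Lbound Hdom Htheta ((s^-1)%g i) ((s^-1)%g j).
have bnd2 := Lbound Hdom Htheta ((s^-1)%g j) ((s^-1)%g i).
pose T := fun l : 'I_n => bz (f l < f j)%N + bz (f i < f l)%N - bz (f l < f i)%N - bz (f j < f l)%N.
pose ci := fun l : 'I_n => bz ((i < l)%N && (l < j)%N).
have SW' : (Ninv (fun k => f (t k)))%:Z - (Ninv f)%:Z =
    bz (f i < f j)%N - bz (f j < f i)%N + \sum_(l < n) ci l * T l := SW.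
have CNT' : \sum_(l < n) ci l = ((j - i.+1)%N)%:Z := CNT.
case: (ltngtP (f i) (f j)) => hf.
-
  have nf : (f j < f i)%N = false by apply/negbTE; rewrite -leqNgt ltnW.
  have a0 : 0 < ip x (proot i j) by rewrite gt0.
  have M : malpha r (x + r%:R *: gam c) (proot i j) = ip x (proot i j).
    by apply: (malpha_eq r0 _ Hip); rewrite ltW //= ipx.
  rewrite /refl M.
  have -> : x + r%:R *: gam c - ip x (proot i j) *: proot i j = sact (s * t)%g Lam + r%:R *: gam c.
    by rewrite sact_swap // ip_proot addrAC.
  rewrite (adm_iff HP Hdom Htheta r0) P0 P1 (gt0 i j) (lt0 i j) hf nf.
  rewrite hf nf in SW'.
  have Hnn : forall l : 'I_n, true -> 0 <= ci l * T l.
    move=> l _; rewrite /ci /T; case: (boolP ((i < l)%N && (l < j)%N)) => hb.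
    + rewrite ?hb /=; case/andP: hb => h1 h2.
      have := fi l h1; have := fj l h2; lia.
    + by rewrite ?(negbTE hb) /= mul0r.
  split.
  + move=> E; left; split=> //; apply/DecOr => k hk.
    have S0 : \sum_(l < n) ci l * T l = 0 by move: SW' E; lia.
    have : ci k * T k = 0 by apply: (psumr_eq0P Hnn S0).
    rewrite /ci /T hk /=.
    case/andP: hk => h1 h2; have := fi k h1; have := fj k h2; lia.
  + case=> [[_ H] | [H _]] //.
    move/DecOr: H => H.
    have S0 : \sum_(l < n) ci l * T l = 0.
      apply: big1 => l _; rewrite /ci /T; case: (boolP ((i < l)%N && (l < j)%N)) => hb.
      * rewrite ?hb /=; case: (H l hb) => h.
        case/andP: hb => h1 h2; have := fi l h1; have := fj l h2; lia.
        case/andP: hb => h1 h2; have := fi l h1; have := fj l h2; lia.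
      * by rewrite ?(negbTE hb) /= mul0r.
    move: SW'; rewrite S0; lia.
-
  have nf : (f i < f j)%N = false by apply/negbTE; rewrite -leqNgt ltnW.
  have a0 : ip x (proot i j) < 0 by rewrite lt0.
  have ar : - r%:R < ip x (proot i j) by rewrite ipx; lra.
  pose c' := fun k : 'I_n.-1 => c k - (((i <= k)%N && (k < j)%N) : nat)%:Z.
  have G' : gam c' = gam c - proot i j := gam_shift c hij.
  have Hip' : ip (x + r%:R *: gam c) (proot i j) =
      (ip x (proot i j) + r%:R) + r%:R * (w - 1)%:~R.
    rewrite Hip intrB; ring.
  have M : malpha r (x + r%:R *: gam c) (proot i j) = ip x (proot i j) + r%:R.
    by apply: (malpha_eq r0 _ Hip'); apply/andP; split; lra.
  rewrite /refl M.
  have -> : x + r%:R *: gam c - (ip x (proot i j) + r%:R) *: proot i j =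
      sact (s * t)%g Lam + r%:R *: gam c'.
    by rewrite G' sact_swap // ip_proot scalerDl (scalerBr r%:R (gam c) (proot i j)) zmod_rearr.
  have Ac : absQ c' = absQ c + ((i : nat)%:Z - (j : nat)%:Z).
    apply: (@intr_inj rat); rewrite intrD intrB !absQE G' ipBl absQ_proot.
    rewrite !pmulrn; ring.
  rewrite (adm_iff HP Hdom Htheta r0) P0 P1 Ac (gt0 i j) (lt0 i j) hf nf.
  rewrite hf nf in SW'.
  have Hnn : forall l : 'I_n, true -> 0 <= ci l * (T l + 2).
    move=> l _; rewrite /ci /T; case: (boolP ((i < l)%N && (l < j)%N)) => hb.
    + rewrite ?hb /=; case/andP: hb => h1 h2.
      have := fi l h1; have := fj l h2; lia.
    + by rewrite ?(negbTE hb) /= mul0r.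
  have SS : \sum_(l < n) ci l * (T l + 2) = \sum_(l < n) ci l * T l + ((j - i.+1)%N)%:Z * 2.
    by rewrite -CNT' mulr_suml -big_split; apply: eq_bigr => l _; rewrite mulrDr.
  split.
  + move=> E; right; split=> //; apply/DecAnd => k hk.
    have S0 : \sum_(l < n) ci l * (T l + 2) = 0 by rewrite SS; move: SW' E; lia.
    have : ci k * (T k + 2) = 0 by apply: (psumr_eq0P Hnn S0).
    rewrite /ci /T hk /=.
    case/andP: hk => h1 h2; have := fi k h1; have := fj k h2; lia.
  + case=> [[H _] | [_ H]] //.
    move/DecAnd: H => H.
    have S0 : \sum_(l < n) ci l * (T l + 2) = 0.
      apply: big1 => l _; rewrite /ci /T; case: (boolP ((i < l)%N && (l < j)%N)) => hb.
      * rewrite ?hb /=; case: (H l hb) => h h'.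
        case/andP: hb => h1 h2; have := fi l h1; have := fj l h2; lia.
      * by rewrite ?(negbTE hb) /= mul0r.
    move: SW' S0; rewrite SS; lia.
- by move/eqP: hf; rewrite finj (negbTE nij).
Qed.
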